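(* Let $(R,R^+)$ be a sheafy Tate–Huber pair with pseudo-uniformizer $\varpi\in R^+$, and let $P$ be a finite rank projective $R$-module endowed with its canonical topology. Then every $R^+$-submodule $M\subseteq P$ with $M[1/\varpi]=P$ is open in $P$.
   Context: The canonical topology on a finite projective $R$-module $P$ (in the sense of Kedlaya–Liu) is the quotient topology induced by any $R$-linear surjection $R^n\to P$; it makes $P$ complete and does not depend on the choice of surjection. *)

(* Defs.v *)
From HB Require Import structures.
From mathcomp Require Import all_boot all_order all_algebra.
From mathcomp Require Import boolp classical_sets.
Set Implicit Arguments. Unset Strict Implicit. Unset Printing Implicit Defensive.
Import GRing.Theory.
Local Open Scope ring_scope.
Local Open Scope classical_set_scope.

Definition is_topology (T : Type) (O : set (set T)) : Prop :=
  [/\ O setT, O set0,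
      (forall U V, O U -> O V -> O (U `&` V)) &
      (forall F : set (set T), F `<=` O -> O (\bigcup_(U in F) U))].

Definition topological_ring (R : pzRingType) (O : set (set R)) : Prop :=
  [/\ is_topology O,
      (forall U x y, O U -> U (x + y) -> exists V W,
          [/\ O V, O W, V x, W y & forall a b, V a -> W b -> U (a + b)]),
      (forall U x, O U -> U (- x) -> exists V,
          [/\ O V, V x & forall a, V a -> U (- a)]) &
      (forall U x y, O U -> U (x * y) -> exists V W,
          [/\ O V, O W, V x, W y & forall a b, V a -> W b -> U (a * b)])].

Definition is_subring (R : pzRingType) (A : set R) : Prop :=
  [/\ A 1, (forall x y, A x -> A y -> A (x - y)) &
      (forall x y, A x -> A y -> A (x * y))].

Definition span (R : pzRingType) (A S : set R) : set R :=
  [set x | exists s : seq (R * R),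
     (forall p, p \in s -> A p.1 /\ S p.2) /\ x = \sum_(p <- s) p.1 * p.2].

Fixpoint prods (R : pzRingType) (S : set R) (n : nat) : set R :=
  match n with
  | 0 => [set 1]
  | m.+1 => [set z | exists a b, [/\ S a, prods S m b & z = a * b]]
  end.

(* I^n for the ideal I of R0 generated by the finite list g *)
Definition ideal_pow (R : pzRingType) (R0 : set R) (g : seq R) (n : nat) : set R :=
  span R0 (prods [set x | x \in g] n).

(* Huber ring: there is an open subring R0 (ring of definition) and a finitely
   generated ideal I of R0 such that the topology on R0 is I-adic. *)
Definition huber_ring (R : pzRingType) (O : set (set R)) : Prop :=
  topological_ring O /\
  exists (R0 : set R) (g : seq R),
    [/\ is_subring R0, O R0, (forall x, x \in g -> R0 x),
        (forall n, O (ideal_pow R0 g n)) &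
        (forall U, O U -> U 0 -> exists n, ideal_pow R0 g n `<=` U)].

Definition top_nilpotent (R : pzRingType) (O : set (set R)) (x : R) : Prop :=
  forall U, O U -> U 0 -> exists N, forall n, (N <= n)%N -> U (x ^+ n).

Definition pseudo_uniformizer (R : unitRingType) (O : set (set R)) (x : R) : Prop :=
  x \is a GRing.unit /\ top_nilpotent O x.

Definition bounded_set (R : pzRingType) (O : set (set R)) (S : set R) : Prop :=
  forall U, O U -> U 0 -> exists V, [/\ O V, V 0 & forall a b, V a -> S b -> U (a * b)].

Definition power_bounded (R : pzRingType) (O : set (set R)) (x : R) : Prop :=
  bounded_set O [set y | exists n, y = x ^+ n].

Definition integrally_closed (R : comUnitRingType) (A : set R) : Prop :=
  forall (p : {poly R}) (x : R), p \is monic -> (forall i, A p`_i) -> root p x -> A x.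

Definition ring_of_integral_elements (R : comUnitRingType) (O : set (set R)) (Rp : set R)
  : Prop :=
  [/\ is_subring Rp, O Rp, integrally_closed Rp & forall x, Rp x -> power_bounded O x].

Definition huber_pair (R : comUnitRingType) (O : set (set R)) (Rp : set R) : Prop :=
  huber_ring O /\ ring_of_integral_elements O Rp.

Definition tate_huber_pair (R : comUnitRingType) (O : set (set R)) (Rp : set R) : Prop :=
  huber_pair O Rp /\ exists x, pseudo_uniformizer O x.

Definition prod_open (R : pzRingType) (O : set (set R)) (n : nat)
  (V : set 'rV[R]_n) : Prop :=
  forall v, V v -> exists U : 'I_n -> set R,
    (forall i, O (U i) /\ U i (v ord0 i)) /\
    (forall w : 'rV[R]_n, (forall i, U i (w ord0 i)) -> V w).

Definition quot_open (R : comUnitRingType) (O : set (set R)) (P : lmodType R) (n : nat)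
  (f : 'rV[R]_n -> P) (U : set P) : Prop :=
  prod_open O (f @^-1` U).

Definition finite_projective (R : comUnitRingType) (P : lmodType R) : Prop :=
  exists n (f : {linear 'rV[R]_n -> P}) (s : {linear P -> 'rV[R]_n}), cancel s f.

Definition submodule_over (R : comUnitRingType) (Rp : set R) (P : lmodType R)
  (M : set P) : Prop :=
  [/\ M 0, (forall x y, M x -> M y -> M (x + y)) &
      (forall r x, Rp r -> M x -> M (r *: x))].

(* Main.v *)
Require Import Defs.
From HB Require Import structures.
From mathcomp Require Import all_boot all_order all_algebra.
From mathcomp Require Import boolp classical_sets.
Import GRing.Theory.
Local Open Scope ring_scope.
Local Open Scope classical_set_scope.

Lemma open_affine (R : comUnitRingType) (O : set (set R)) (Rp : set R)
  (HO : topological_ring O) (HRp : O Rp) (c w : R) :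
  O [set a | Rp (c * (a - w))].
Proof.
case: HO => [[_ _ _ Hun] Hadd _ Hmul].
set S := [set a | Rp (c * (a - w))].
have -> : S = \bigcup_(V in [set V | O V /\ V `<=` S]) V.
  apply/seteqP; split => a.
    move=> Sa.
    have [V [W [OV OW Vc Wa HVW]]] := Hmul Rp c (a - w) HRp Sa.
    have [V' [W' [OV' OW' V'a W'w HV'W']]] := Hadd W a (- w) OW Wa.
    exists V' => //; split => // b V'b.
    by apply: HVW Vc _; apply: HV'W'.
  by case=> V [_ HV] Va; apply: HV.
by apply: Hun => V [].
Qed.

Lemma Rp_exp (R : comUnitRingType) (Rp : set R) (H : is_subring Rp) (x : R) k :
  Rp x -> Rp (x ^+ k).
Proof.
case: H => H1 _ Hm Hx; elim: k => [|k IH]; first by rewrite expr0.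
by rewrite exprS; apply: Hm.
Qed.

Theorem lemma2p3 (R : comUnitRingType) (O : set (set R)) (Rp : set R)
  (HR : tate_huber_pair O Rp)
  (pi : R) (Hpi : pseudo_uniformizer O pi) (HpiRp : Rp pi)
  (P : lmodType R) (HP : finite_projective P)
  (n : nat) (f : {linear 'rV[R]_n -> P}) (Hf : forall y : P, exists x, f x = y)
  (M : set P) (HM : submodule_over Rp M)
  (HMP : forall x : P, exists (k : nat) (m : P), M m /\ x = pi ^- k *: m) :
  quot_open O f M.
Proof.
case: HR => [[[Htop _] [Hsub HRpO _ _]] _].
case: Hpi => Hunit _.
case: HM => M0 MD MZ.
have mono : forall (x : P) k K, (k <= K)%N -> M (pi ^+ k *: x) -> M (pi ^+ K *: x).
  move=> x k K kK Mx.
  rewrite -(subnK kK) exprD -scalerA; apply: MZ => //.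
  exact: Rp_exp.
have base : forall s : seq 'I_n, exists K, forall i, i \in s ->
    M (pi ^+ K *: f (delta_mx 0 i)).
  elim=> [|j s [K IH]]; first by exists 0%N.
  have [k [m [Mm Hm]]] := HMP (f (delta_mx 0 j)).
  have Mj : M (pi ^+ k *: f (delta_mx 0 j)).
    by rewrite Hm scalerA mulrV ?scale1r // unitrX.
  exists (maxn K k) => i; rewrite inE => /orP [/eqP -> | ins].
    by apply: (mono _ k) => //; exact: leq_maxr.
  by apply: (mono _ K) => //; [exact: leq_maxl | exact: IH].
have [K HK] := base (enum 'I_n).
set c := (pi ^+ K)^-1.
move=> w Mw.
exists (fun i => [set a | Rp (c * (a - w 0 i))]); split.
  move=> i; split; first (rewrite /=; exact: (@open_affine R O Rp Htop HRpO c (w 0 i))).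
  by rewrite /= subrr mulr0; case: Hsub => H1 Hs _; rewrite -(subrr 1); apply: Hs.
move=> w' Hw'.
rewrite /preimage /=.
have -> : w' = w + (w' - w) by rewrite addrC subrK.
rewrite linearD; apply: (MD) => //.
rewrite (row_sum_delta (w' - w)) linear_sum.
apply: (@big_ind P (fun x => M x)) => //.
move=> i _; rewrite linearZ /=.
have -> : (w' - w) 0 i = (c * (w' 0 i - w 0 i)) * pi ^+ K.
  by rewrite mulrC mulrA mulrV ?mul1r ?unitrX // !mxE.
rewrite -scalerA; apply: MZ; first exact: Hw'.
by apply: HK; rewrite mem_enum.
Qed.
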